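(* Let $n\ge m\ge 2$ and let $\bm W\in\mathbb{R}^{m\times n}$ satisfy $\bm W\bm W^T=\bm I_m$ and $\bm\xi_m^T\bm W\bm\xi_n=1$. Let $\bm w_i^T$ denote the $i$-th row of $\bm W$, and define $\bm h_i:=\bm w_i-\operatorname{proj}_{\bm\xi_n}(\bm w_i)=\bm w_i-(\bm w_i^T\bm\xi_n)\bm\xi_n$ for $i=1,\dots,m$, and $\bm H=[\bm h_1\ \cdots\ \bm h_m]\in\mathbb{R}^{n\times m}$. Then for all $i,j\in\{1,\dots,m\}$, \[ (\bm H^T\bm H)_{ij}=\bm h_i^T\bm h_j=\begin{cases}\frac{m-1}{m}, & i=j,\\ -\frac1m, & i\ne j.\end{cases} \]
   Context: $\bm 1_k$ denotes the all-ones vector in $\mathbb{R}^k$ and $\bm\xi_k=\frac{1}{\sqrt k}\bm 1_k$. *)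

(* Defs.v *)
From HB Require Import structures.
From mathcomp Require Import all_boot all_order all_algebra.
From mathcomp Require Import reals.
Set Implicit Arguments. Unset Strict Implicit. Unset Printing Implicit Defensive.
Import Order.TTheory GRing.Theory Num.Theory.
Local Open Scope ring_scope.

Definition xi (R : realType) (k : nat) : 'cV[R]_k :=
  (Num.sqrt (k%:R : R))^-1 *: const_mx 1.

Definition hvec (R : realType) (m n : nat) (W : 'M[R]_(m, n)) (i : 'I_m) : 'cV[R]_n :=
  (row i W)^T - ((row i W *m xi R n) 0 0) *: xi R n.

Definition Hmat (R : realType) (m n : nat) (W : 'M[R]_(m, n)) : 'M[R]_(n, m) :=
  \matrix_(k < n, i < m) hvec W i k 0.

(* Main.v *)
Require Import Defs.
From HB Require Import structures.
From mathcomp Require Import all_boot all_order all_algebra.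
From mathcomp Require Import reals.
From mathcomp Require Import ring lra.
Import Order.TTheory GRing.Theory Num.Theory.
Local Open Scope ring_scope.

Lemma xi_norm (R : realType) (n : nat) : (0 < n)%N -> ((xi R n)^T *m xi R n) 0 0 = 1.
Proof.
move=> n0; rewrite !mxE.
under eq_bigr => k _ do rewrite !mxE mulr1.
rewrite sumr_const card_ord -expr2 exprVn sqr_sqrtr ?ler0n //.
by rewrite -[_ *+ n]mulr_natr mulVf // pnatr_eq0 -lt0n.
Qed.

Lemma sq_ge0 (R : realType) (k : nat) (d : 'cV[R]_k) : 0 <= (d^T *m d) 0 0.
Proof. rewrite !mxE; apply: sumr_ge0 => i _; rewrite !mxE; by rewrite -expr2 sqr_ge0. Qed.

Lemma trB (R : realType) (p q : nat) (x y : 'M[R]_(p, q)) : (x - y)^T = x^T - y^T.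
Proof. by apply/matrixP => k l; rewrite !mxE. Qed.

Lemma dotE (R : realType) (n : nat) (x y v : 'cV[R]_n) (s t : R) :
  ((x - s *: v)^T *m (y - t *: v)) 0 0 =
  (x^T *m y) 0 0 - t * (x^T *m v) 0 0 - s * (v^T *m y) 0 0 + s * t * (v^T *m v) 0 0.
Proof.
rewrite !mxE !mulr_sumr -!sumrB -big_split /=; apply: eq_bigr => k _; rewrite !mxE; ring.
Qed.

Theorem proposition2 (R : realType) (m n : nat) (W : 'M[R]_(m, n))
    (Hmn : (2 <= m <= n)%N)
    (HWW : W *m W^T = 1%:M)
    (Hxi : ((xi R m)^T *m W *m xi R n) 0 0 = 1) :
  forall i j : 'I_m,
    ((Hmat W)^T *m Hmat W) i j = ((hvec W i)^T *m hvec W j) 0 0 /\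
    ((Hmat W)^T *m Hmat W) i j =
      (if i == j then (m%:R - 1) / m%:R else - 1 / m%:R).
Proof.
move=> i j.
have E1 : ((Hmat W)^T *m Hmat W) i j = ((hvec W i)^T *m hvec W j) 0 0.
  by rewrite !mxE; apply: eq_bigr => k _; rewrite !mxE.
split => //; rewrite E1.
have m0 : (0 < m)%N by case/andP: Hmn => /ltnW.
have n0 : (0 < n)%N by case/andP: Hmn => h1 h2; apply: leq_trans h2; apply: ltnW.
set v := xi R n.
set a := W *m v.
have ha k : (row k W *m v) 0 0 = a k 0 by rewrite -row_mul mxE.
have hv := @xi_norm R n n0.
have Sle : (a^T *m a) 0 0 <= 1.
  pose u := W^T *m a.
  have := @sq_ge0 R n (v - u).
  rewrite trB mulmxBl !mulmxBr.
  have -> : v^T *m u = a^T *m a by rewrite /u /a trmx_mul !mulmxA.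
  have -> : u^T *m v = a^T *m a by rewrite /u trmx_mul trmxK -mulmxA.
  have -> : u^T *m u = a^T *m a.
    by rewrite /u trmx_mul trmxK mulmxA -(mulmxA _ W) HWW mulmx1.
  move: hv; rewrite !mxE => hv; rewrite hv subrr subr0 subr_ge0 => //.
set c := (Num.sqrt (m%:R : R))^-1.
have hc2 : c ^+ 2 * m%:R = 1.
  by rewrite exprVn sqr_sqrtr ?ler0n // mulVf // pnatr_eq0 -lt0n.
have Hs : c * \sum_k a k 0 = 1.
  move: Hxi; rewrite -mulmxA -/v -/a mxE => <-.
  rewrite mulr_sumr; apply: eq_bigr => k _; rewrite !mxE mulr1 //.
have Sa : (a^T *m a) 0 0 = \sum_k a k 0 ^+ 2.
  by rewrite mxE; apply: eq_bigr => k _; rewrite mxE expr2.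
have hac k : a k 0 = c.
  have H0 : \sum_k (a k 0 - c) ^+ 2 = 0.
    apply/eqP; rewrite eq_le sumr_ge0 ?andbT; last by move=> l _; rewrite sqr_ge0.
    have -> : \sum_k (a k 0 - c) ^+ 2 = \sum_k a k 0 ^+ 2 - (c * \sum_k a k 0) *+ 2 + c ^+ 2 * m%:R.
      under eq_bigr => l _ do rewrite sqrrB.
      rewrite big_split /= sumrB sumr_const card_ord mulr_natr; congr (_ - _ + _).
      by rewrite mulr_sumr -sumrMnl; apply: eq_bigr => l _; rewrite mulrC.
    rewrite Hs hc2 -Sa; lra.
  have := @psumr_eq0P R _ _ _ (fun l _ => sqr_ge0 (a l 0 - c)) H0 k isT.
  by move/eqP; rewrite sqrf_eq0 subr_eq0 => /eqP.
rewrite /hvec !ha !hac dotE trmxK.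
have -> : (row i W *m (row j W)^T) 0 0 = (i == j)%:R.
  by have := congr1 (fun M : 'M[R]_m => M i j) HWW; rewrite !mxE => <-; apply: eq_bigr => k _; rewrite !mxE.
rewrite -/v ha hac.
have -> : (v^T *m (row j W)^T) 0 0 = c.
  by rewrite -trmx_mul mxE ha hac.
rewrite -/v.

rewrite hv.
have mn0 : (m%:R : R) != 0 by rewrite pnatr_eq0 -lt0n.
have hcc : c * c = m%:R^-1.
  by rewrite -expr2; apply: (mulIf mn0); rewrite hc2 mulVf.
by case: eqP => _; rewrite mulr1 hcc /=; field.
Qed.
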